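(* Let $u\in C([0,\infty)^2)$ be a viscosity subsolution and $v\in C([0,\infty)^2)$ a viscosity supersolution of \[ \partial_t f - 2(\partial_h f)^2 = 0 \ \text{ in } (0,\infty)^2, \qquad -\partial_h f = 0 \ \text{ on } (0,\infty)\times\{0\}, \] such that both $u$ and $v$ are uniformly Lipschitz continuous in the variable $h$. Then \[ \sup_{[0,\infty)^2}(u-v)=\sup_{\{0\}\times[0,\infty)}(u-v). \]
   Context: Viscosity solutions: $f\in C([0,\infty)^2)$ (variables $(t,h)$) is a viscosity subsolution if for every $(t,h)\in(0,\infty)\times[0,\infty)$ and $\phi\in C^\infty((0,\infty)\times[0,\infty))$ such that $f-\phi$ has a local maximum at $(t,h)$, we have $(\partial_t\phi-2(\partial_h\phi)^2)(t,h)\le0$ if $h>0$, and $\min(-\partial_h\phi,\partial_t\phi-2(\partial_h\phi)^2)(t,h)\le0$ if $h=0$. It is a viscosity supersolution if for every such $(t,h),\phi$ with $f-\phi$ having a local minimum at $(t,h)$, we have $(\partial_t\phi-2(\partial_h\phi)^2)(t,h)\ge0$ if $h>0$, and $\max(-\partial_h\phi,\partial_t\phi-2(\partial_h\phi)^2)(t,h)\ge0$ if $h=0$. ''Uniformly Lipschitz in $h$'' means there is $L<\infty$ with $|u(t,h)-u(t,h')|\le L|h-h'|$ for all $t,h,h'\ge0$. *)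

(* Defs.v *)
From Stdlib Require Import Reals List.
From Coquelicot Require Import Coquelicot.
Open Scope R_scope.

Definition d_t (f : R -> R -> R) : R -> R -> R :=
  fun t h => Derive (fun s => f s h) t.
Definition d_h (f : R -> R -> R) : R -> R -> R :=
  fun t h => Derive (fun k => f t k) h.

Fixpoint pderiv (ds : list bool) (f : R -> R -> R) : R -> R -> R :=
  match ds with
  | nil => f
  | b :: ds' => if b then d_t (pderiv ds' f) else d_h (pderiv ds' f)
  end.

Definition cont2_at (g : R -> R -> R) (t h : R) : Prop :=
  forall eps, 0 < eps -> exists delta, 0 < delta /\
    forall s k, Rabs (s - t) < delta -> Rabs (k - h) < delta ->
      Rabs (g s k - g t h) < eps.

Definition open2 (U : R -> R -> Prop) : Prop :=
  forall t h, U t h -> exists r, 0 < r /\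
    forall s k, Rabs (s - t) < r -> Rabs (k - h) < r -> U s k.

Definition smooth_on (U : R -> R -> Prop) (f : R -> R -> R) : Prop :=
  forall ds t h, U t h ->
    ex_derive (fun s => pderiv ds f s h) t /\
    ex_derive (fun k => pderiv ds f t k) h /\
    cont2_at (pderiv ds f) t h.

Definition Omega (t h : R) : Prop := 0 < t /\ 0 <= h.

(* phi in C^infinity((0,oo) x [0,oo)): phi is smooth on some open set
   containing (0,oo) x [0,oo) (smoothness up to the boundary h = 0). *)
Definition test_fun (phi : R -> R -> R) : Prop :=
  exists U, open2 U /\ (forall t h, Omega t h -> U t h) /\ smooth_on U phi.

Definition cont_quadrant (f : R -> R -> R) : Prop :=
  forall t h, 0 <= t -> 0 <= h ->
  forall eps, 0 < eps -> exists delta, 0 < delta /\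
    forall s k, 0 <= s -> 0 <= k -> Rabs (s - t) < delta -> Rabs (k - h) < delta ->
      Rabs (f s k - f t h) < eps.

Definition loc_max (g : R -> R -> R) (t h : R) : Prop :=
  exists r, 0 < r /\ forall s k, 0 <= s -> 0 <= k ->
    Rabs (s - t) < r -> Rabs (k - h) < r -> g s k <= g t h.
Definition loc_min (g : R -> R -> R) (t h : R) : Prop :=
  exists r, 0 < r /\ forall s k, 0 <= s -> 0 <= k ->
    Rabs (s - t) < r -> Rabs (k - h) < r -> g t h <= g s k.

Definition visc_sub (f : R -> R -> R) : Prop :=
  cont_quadrant f /\
  forall t h phi, Omega t h -> test_fun phi ->
    loc_max (fun s k => f s k - phi s k) t h ->
    (0 < h -> d_t phi t h - 2 * (d_h phi t h) ^ 2 <= 0) /\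
    (h = 0 -> Rmin (- d_h phi t h) (d_t phi t h - 2 * (d_h phi t h) ^ 2) <= 0).

Definition visc_super (f : R -> R -> R) : Prop :=
  cont_quadrant f /\
  forall t h phi, Omega t h -> test_fun phi ->
    loc_min (fun s k => f s k - phi s k) t h ->
    (0 < h -> d_t phi t h - 2 * (d_h phi t h) ^ 2 >= 0) /\
    (h = 0 -> Rmax (- d_h phi t h) (d_t phi t h - 2 * (d_h phi t h) ^ 2) >= 0).

Definition unif_lip_h (f : R -> R -> R) : Prop :=
  exists L, forall t h h', 0 <= t -> 0 <= h -> 0 <= h' ->
    Rabs (f t h - f t h') <= L * Rabs (h - h').

Definition sup_quadrant (u v : R -> R -> R) : Rbar :=
  Lub_Rbar (fun x => exists t h, 0 <= t /\ 0 <= h /\ x = u t h - v t h).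
Definition sup_initial (u v : R -> R -> R) : Rbar :=
  Lub_Rbar (fun x => exists h, 0 <= h /\ x = u 0 h - v 0 h).

(* Main.v *)
Require Import Defs.
From Stdlib Require Import Reals Lra.
From Coquelicot Require Import Coquelicot.
Module MC.
From mathcomp Require Import all_boot all_order all_algebra.
From mathcomp Require Import all_classical all_reals all_analysis.
From mathcomp Require Import Rstruct Rstruct_topology.
Import Order.TTheory GRing.Theory Num.Theory.
Local Open Scope ring_scope.
Local Open Scope classical_set_scope.
Lemma test (G : (R * R) * (R * R) -> R) :
  (forall x (eps : R), (0 < eps)%coqR -> exists del : R, (0 < del)%coqR /\ forall y,
     Rabs (y.1.1 - x.1.1) < del -> Rabs (y.1.2 - x.1.2) < del ->
     Rabs (y.2.1 - x.2.1) < del -> Rabs (y.2.2 - x.2.2) < del -> Rabs (G y - G x) < eps)%coqR ->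
  continuous G.
Proof.
move=> H x A /nbhs_ballP [e /= /RltP e0 HA].
have [d [d0 Hd]] := H x e e0.
apply/nbhs_ballP; exists d; first by apply/RltP.
move=> y [[/= b11 b12] [/= b21 b22]].
apply: HA. 
rewrite /ball /= -RabsE -Rabs_Ropp Ropp_minus_distr; apply/RltP; apply: Hd.
all: move: b11 b12 b21 b22; rewrite /ball /= -!RabsE => /RltP ? /RltP ? /RltP ? /RltP ?.
all: by rewrite -Rabs_Ropp Ropp_minus_distr.
Qed.
Lemma evt4 (G : (R * R) * (R * R) -> R) (T K : R) :
  (0 <= T)%coqR -> (0 <= K)%coqR -> continuous G ->
  exists c : (R * R) * (R * R), 
   ((0 <= c.1.1 <= T) /\ (0 <= c.1.2 <= T) /\ (0 <= c.2.1 <= K) /\ (0 <= c.2.2 <= K))%coqR /\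
   forall y : (R * R) * (R * R),
   ((0 <= y.1.1 <= T) /\ (0 <= y.1.2 <= T) /\ (0 <= y.2.1 <= K) /\ (0 <= y.2.2 <= K))%coqR ->
   (G y <= G c)%coqR.
Proof.
move=> /RleP T0 /RleP K0 cG.
set A := (`[0, T] `*` `[0, T]) `*` (`[0, K] `*` `[0, K]).
have A0 : A !=set0.
  by exists ((0,0),(0,0)); rewrite /A /=; rewrite !in_itv /= lexx T0 K0.
have cA : compact A.
  by apply: compact_setX; apply: compact_setX; apply: segment_compact.
have [c cA' Hc] := compact_EVT_max A0 cA (@continuous_subspaceT _ _ A G cG).
exists c; split.
  move: cA'; rewrite inE /A /= !in_itv /= => -[[/andP[/RleP ? /RleP ?] /andP[/RleP ? /RleP ?]] [/andP[/RleP ? /RleP ?] /andP[/RleP ? /RleP ?]]].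
  by repeat split.
move=> y [[? ?] [[? ?] [[? ?] [? ?]]]]; apply/RleP; apply: Hc.
rewrite inE /A /= !in_itv /=.
by repeat split; apply/andP; split; apply/RleP.
Qed.
End MC.
Open Scope R_scope.

Definition clamp (a b x : R) := Rmax a (Rmin b x).
Lemma clamp_lip a b x y : Rabs (clamp a b y - clamp a b x) <= Rabs (y - x).
Proof.
  unfold clamp, Rmax, Rmin.
  repeat destruct Rle_dec; unfold Rabs; repeat destruct Rcase_abs; lra.
Qed.
Lemma clamp_in a b x : a <= b -> a <= clamp a b x <= b.
Proof. intros; unfold clamp, Rmax, Rmin; repeat destruct Rle_dec; lra. Qed.
Lemma clamp_id a b x : a <= x <= b -> clamp a b x = x.
Proof. intros; unfold clamp, Rmax, Rmin; repeat destruct Rle_dec; lra. Qed.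

Definition inb (T K a b c d : R) := 0<=a<=T /\ 0<=b<=T /\ 0<=c<=K /\ 0<=d<=K.

Lemma max4 (F : R->R->R->R->R) T K : 0<=T -> 0<=K ->
 (forall a b c d, inb T K a b c d -> forall eps, 0<eps -> exists del, 0<del /\
   forall a' b' c' d', inb T K a' b' c' d' -> Rabs (a'-a)<del -> Rabs(b'-b)<del ->
     Rabs(c'-c)<del -> Rabs(d'-d)<del -> Rabs (F a' b' c' d' - F a b c d) < eps) ->
 exists a b c d, inb T K a b c d /\
   forall a' b' c' d', inb T K a' b' c' d' -> F a' b' c' d' <= F a b c d.
Proof.
  intros HT HK HF.
  set (G := fun x : (R*R)*(R*R) => F (clamp 0 T (fst (fst x))) (clamp 0 T (snd (fst x)))
      (clamp 0 K (fst (snd x))) (clamp 0 K (snd (snd x)))).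
  assert (cG := MC.test G).
  destruct (MC.evt4 G T K HT HK) as [c [Hc Hmax]].
  - apply cG. intros x eps Heps.
    destruct (HF (clamp 0 T (fst (fst x))) (clamp 0 T (snd (fst x)))
      (clamp 0 K (fst (snd x))) (clamp 0 K (snd (snd x)))) with eps as [d [Hd Hd']];
      [repeat split; apply clamp_in; lra | lra |].
    exists d; split; [lra|]. intros y H1 H2 H3 H4. unfold G.
    apply Hd'; [repeat split; apply clamp_in; lra| | | |];
      eapply Rle_lt_trans; try apply clamp_lip; assumption.
  - destruct c as [[a b] [c d]]. simpl in *.
    exists a, b, c, d. split; [exact Hc|].
    intros a' b' c' d' Hin.
    specialize (Hmax ((a',b'),(c',d')) Hin). unfold G in Hmax; simpl in Hmax.
    destruct Hin as [? [? [? ?]]]; destruct Hc as [? [? [? ?]]].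
    rewrite !clamp_id in Hmax by lra. exact Hmax.
Qed.
Inductive Poly2 : (R -> R -> R) -> Prop :=
| P_const c : Poly2 (fun _ _ => c)
| P_t : Poly2 (fun t _ => t)
| P_h : Poly2 (fun _ h => h)
| P_add f g : Poly2 f -> Poly2 g -> Poly2 (fun t h => f t h + g t h)
| P_mul f g : Poly2 f -> Poly2 g -> Poly2 (fun t h => f t h * g t h)
| P_ext f g : Poly2 f -> (forall t h, f t h = g t h) -> Poly2 g.

Lemma Poly2_ex f : Poly2 f -> forall t h,
  ex_derive (fun s => f s h) t /\ ex_derive (fun k => f t k) h.
Proof.
  induction 1; intros t h.
  - split; apply ex_derive_const.
  - split; [apply ex_derive_id | apply ex_derive_const].
  - split; [apply ex_derive_const | apply ex_derive_id].
  - destruct (IHPoly2_1 t h), (IHPoly2_2 t h); split.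
    + apply (ex_derive_plus (fun s => f s h) (fun s => g s h)); auto.
    + apply (ex_derive_plus (fun s => f t s) (fun s => g t s)); auto.
  - destruct (IHPoly2_1 t h), (IHPoly2_2 t h); split.
    + apply (ex_derive_mult (fun s => f s h) (fun s => g s h)); auto.
    + apply (ex_derive_mult (fun s => f t s) (fun s => g t s)); auto.
  - destruct (IHPoly2 t h); split.
    + eapply ex_derive_ext; [|eauto]; simpl; intros; apply H0.
    + eapply ex_derive_ext; [|eauto]; simpl; intros; apply H0.
Qed.

Lemma Poly2_dt f : Poly2 f -> Poly2 (d_t f).
Proof.
  induction 1.
  - apply P_ext with (fun _ _ => 0). apply P_const. intros t h; unfold d_t; symmetry; apply Derive_const.
  - apply P_ext with (fun _ _ => 1). apply P_const. intros t h; unfold d_t; symmetry; apply Derive_id.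
  - apply P_ext with (fun _ _ => 0). apply P_const. intros t h; unfold d_t; symmetry; apply Derive_const.
  - apply P_ext with (fun t h => d_t f t h + d_t g t h). apply P_add; assumption.
    intros t h; unfold d_t; symmetry.
    destruct (Poly2_ex f H t h) as [H1 H2], (Poly2_ex g H0 t h) as [H3 H4].
    apply (Derive_plus (fun s => f s h) (fun s => g s h)); assumption.
  - apply P_ext with (fun t h => d_t f t h * g t h + f t h * d_t g t h).
    apply P_add; apply P_mul; assumption.
    intros t h; unfold d_t; symmetry.
    destruct (Poly2_ex f H t h) as [H1 H2], (Poly2_ex g H0 t h) as [H3 H4].
    apply (Derive_mult (fun s => f s h) (fun s => g s h)); assumption.
  - apply P_ext with (d_t f). assumption. intros t h; unfold d_t; apply Derive_ext; intros; apply H0.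
Qed.

Lemma Poly2_dh f : Poly2 f -> Poly2 (d_h f).
Proof.
  induction 1.
  - apply P_ext with (fun _ _ => 0). apply P_const. intros t h; unfold d_h; symmetry; apply Derive_const.
  - apply P_ext with (fun _ _ => 0). apply P_const. intros t h; unfold d_h; symmetry; apply Derive_const.
  - apply P_ext with (fun _ _ => 1). apply P_const. intros t h; unfold d_h; symmetry; apply Derive_id.
  - apply P_ext with (fun t h => d_h f t h + d_h g t h). apply P_add; assumption.
    intros t h; unfold d_h; symmetry.
    destruct (Poly2_ex f H t h) as [H1 H2], (Poly2_ex g H0 t h) as [H3 H4].
    apply (Derive_plus (fun s => f t s) (fun s => g t s)); assumption.
  - apply P_ext with (fun t h => d_h f t h * g t h + f t h * d_h g t h).
    apply P_add; apply P_mul; assumption.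
    intros t h; unfold d_h; symmetry.
    destruct (Poly2_ex f H t h) as [H1 H2], (Poly2_ex g H0 t h) as [H3 H4].
    apply (Derive_mult (fun s => f t s) (fun s => g t s)); assumption.
  - apply P_ext with (d_h f). assumption. intros t h; unfold d_h; apply Derive_ext; intros; apply H0.
Qed.

Lemma Poly2_cc f : Poly2 f -> forall t h,
  continuous (fun p : R * R => f (fst p) (snd p)) (t, h).
Proof.
  induction 1; intros t h.
  - apply continuous_const.
  - apply continuous_fst.
  - apply continuous_snd.
  - apply (continuous_plus (fun p : R * R => f (fst p) (snd p)) (fun p : R * R => g (fst p) (snd p))); auto.
  - apply (continuous_mult (fun p : R * R => f (fst p) (snd p)) (fun p : R * R => g (fst p) (snd p))); auto.
  - eapply continuous_ext; [|apply IHPoly2]. intros; simpl; auto.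
Qed.

Lemma Poly2_cont f : Poly2 f -> forall t h, cont2_at f t h.
Proof.
  intros Hf t h eps Heps.
  destruct (Poly2_cc f Hf t h (ball (f t h) (mkposreal eps Heps))) as [d Hd].
  - apply locally_ball.
  - exists d; split; [apply cond_pos|]. intros s k H1 H2.
    apply (Hd (s, k)). split; assumption.
Qed.

Lemma Poly2_pderiv f : Poly2 f -> forall ds, Poly2 (pderiv ds f).
Proof.
  intros Hf ds; induction ds as [|b ds IH]; simpl; auto.
  destruct b; [apply Poly2_dt | apply Poly2_dh]; auto.
Qed.

Lemma Poly2_test f : Poly2 f -> test_fun f.
Proof.
  intros Hf. exists (fun _ _ => True). split; [|split].
  - intros t h _; exists 1; split; [lra|auto].
  - auto.
  - intros ds t h _. pose proof (Poly2_pderiv f Hf ds) as Hp.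
    destruct (Poly2_ex _ Hp t h). split; [|split]; auto. apply Poly2_cont; auto.
Qed.

Lemma P_sub f g : Poly2 f -> Poly2 g -> Poly2 (fun t h => f t h - g t h).
Proof.
  intros. apply P_ext with (fun t h => f t h + (fun _ _ => -1) t h * g t h).
  apply P_add; auto. apply P_mul; auto. apply P_const. intros; simpl; ring.
Qed.
Lemma P_opp f : Poly2 f -> Poly2 (fun t h => - f t h).
Proof.
  intros. apply P_ext with (fun t h => (fun _ _ => -1) t h * f t h).
  apply P_mul; auto. apply P_const. intros; simpl; ring.
Qed.
Lemma P_divc f c : Poly2 f -> Poly2 (fun t h => f t h / c).
Proof.
  intros. apply P_ext with (fun t h => f t h * (fun _ _ => / c) t h).
  apply P_mul; auto. apply P_const. intros; simpl; unfold Rdiv; ring.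
Qed.
Lemma P_pow f n : Poly2 f -> Poly2 (fun t h => (f t h) ^ n).
Proof.
  intros Hf; induction n as [|n IH]; simpl.
  - apply P_const.
  - apply (P_mul f (fun t h => f t h ^ n)); auto.
Qed.

Ltac poly2 := repeat match goal with
 | |- Poly2 (fun t h => @?a t h + @?b t h) => apply (P_add a b)
 | |- Poly2 (fun t h => @?a t h - @?b t h) => apply (P_sub a b)
 | |- Poly2 (fun t h => @?a t h / ?c) => apply (P_divc a c)
 | |- Poly2 (fun t h => @?a t h * @?b t h) => apply (P_mul a b)
 | |- Poly2 (fun t h => - @?a t h) => apply (P_opp a)
 | |- Poly2 (fun t h => (@?a t h) ^ ?n) => apply (P_pow a n)
 | |- Poly2 (fun t h => t) => apply P_t
 | |- Poly2 (fun t h => h) => apply P_h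
 | |- Poly2 (fun t h => ?c) => apply (P_const c)
 end.

Inductive Poly4 : (R -> R -> R -> R -> R) -> Prop :=
| Q_const c : Poly4 (fun _ _ _ _ => c)
| Q_1 : Poly4 (fun a _ _ _ => a)
| Q_2 : Poly4 (fun _ b _ _ => b)
| Q_3 : Poly4 (fun _ _ c _ => c)
| Q_4 : Poly4 (fun _ _ _ d => d)
| Q_add f g : Poly4 f -> Poly4 g -> Poly4 (fun a b c d => f a b c d + g a b c d)
| Q_mul f g : Poly4 f -> Poly4 g -> Poly4 (fun a b c d => f a b c d * g a b c d)
| Q_ext f g : Poly4 f -> (forall a b c d, f a b c d = g a b c d) -> Poly4 g.

Lemma Q_sub f g : Poly4 f -> Poly4 g -> Poly4 (fun a b c d => f a b c d - g a b c d).
Proof.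
  intros. apply Q_ext with (fun a b c d => f a b c d + (fun _ _ _ _ => -1) a b c d * g a b c d).
  apply Q_add; auto. apply Q_mul; auto. apply Q_const. intros; simpl; ring.
Qed.
Lemma Q_divc f c0 : Poly4 f -> Poly4 (fun a b c d => f a b c d / c0).
Proof.
  intros. apply Q_ext with (fun a b c d => f a b c d * (fun _ _ _ _ => / c0) a b c d).
  apply Q_mul; auto. apply Q_const. intros; simpl; unfold Rdiv; ring.
Qed.
Lemma Q_pow f n : Poly4 f -> Poly4 (fun a b c d => (f a b c d) ^ n).
Proof.
  intros Hf; induction n as [|n IH]; simpl.
  - apply Q_const.
  - apply (Q_mul f (fun a b c d => f a b c d ^ n)); auto.
Qed.
Lemma Q_opp f : Poly4 f -> Poly4 (fun a b c d => - f a b c d).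
Proof.
  intros. apply Q_ext with (fun a b c d => (fun _ _ _ _ => -1) a b c d * f a b c d).
  apply Q_mul; auto. apply Q_const. intros; simpl; ring.
Qed.

Ltac poly4 := repeat match goal with
 | |- Poly4 (fun a b c d => @?x a b c d + @?y a b c d) => apply (Q_add x y)
 | |- Poly4 (fun a b c d => @?x a b c d - @?y a b c d) => apply (Q_sub x y)
 | |- Poly4 (fun a b c d => @?x a b c d / ?z) => apply (Q_divc x z)
 | |- Poly4 (fun a b c d => @?x a b c d * @?y a b c d) => apply (Q_mul x y)
 | |- Poly4 (fun a b c d => - @?x a b c d) => apply (Q_opp x)
 | |- Poly4 (fun a b c d => (@?x a b c d) ^ ?n) => apply (Q_pow x n)
 | |- Poly4 (fun a b c d => a) => apply Q_1
 | |- Poly4 (fun a b c d => b) => apply Q_2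
 | |- Poly4 (fun a b c d => c) => apply Q_3
 | |- Poly4 (fun a b c d => d) => apply Q_4
 | |- Poly4 (fun a b c d => ?z) => apply (Q_const z)
 end.

Lemma Poly4_cc f : Poly4 f -> forall x : (R * R) * (R * R),
  continuous (fun p : (R * R) * (R * R) => f (fst (fst p)) (snd (fst p)) (fst (snd p)) (snd (snd p))) x.
Proof.
  induction 1; intros x.
  - apply continuous_const.
  - apply (continuous_comp (fun p : (R*R)*(R*R) => fst p) fst). apply continuous_fst. apply continuous_fst.
  - apply (continuous_comp (fun p : (R*R)*(R*R) => fst p) snd). apply continuous_fst. apply continuous_snd.
  - apply (continuous_comp (fun p : (R*R)*(R*R) => snd p) fst). apply continuous_snd. apply continuous_fst.
  - apply (continuous_comp (fun p : (R*R)*(R*R) => snd p) snd). apply continuous_snd. apply continuous_snd.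
  - apply (continuous_plus (fun p : (R*R)*(R*R) => f (fst (fst p)) (snd (fst p)) (fst (snd p)) (snd (snd p)))
                           (fun p : (R*R)*(R*R) => g (fst (fst p)) (snd (fst p)) (fst (snd p)) (snd (snd p)))); auto.
  - apply (continuous_mult (fun p : (R*R)*(R*R) => f (fst (fst p)) (snd (fst p)) (fst (snd p)) (snd (snd p)))
                           (fun p : (R*R)*(R*R) => g (fst (fst p)) (snd (fst p)) (fst (snd p)) (snd (snd p)))); auto.
  - eapply continuous_ext; [|apply IHPoly4]. intros; simpl; auto.
Qed.

Lemma Poly4_cont f : Poly4 f -> forall a b c d eps, 0 < eps -> exists del, 0 < del /\
  forall a' b' c' d', Rabs (a' - a) < del -> Rabs (b' - b) < del -> Rabs (c' - c) < del ->
    Rabs (d' - d) < del -> Rabs (f a' b' c' d' - f a b c d) < eps.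
Proof.
  intros Hf a b c d eps Heps.
  destruct (Poly4_cc f Hf ((a,b),(c,d)) (ball (f a b c d) (mkposreal eps Heps))) as [del Hd].
  - apply locally_ball.
  - exists del; split; [apply cond_pos|]. intros a' b' c' d' H1 H2 H3 H4.
    apply (Hd ((a',b'),(c',d'))). split; split; assumption.
Qed.


From Stdlib Require Import Reals Lra.
From Coquelicot Require Import Coquelicot.
Open Scope R_scope.

Definition lipL (f : R -> R -> R) (L : R) := forall t h h', 0 <= t -> 0 <= h -> 0 <= h' ->
    Rabs (f t h - f t h') <= L * Rabs (h - h').

Lemma lip_norm f L1 L2 : lipL f L1 -> L1 <= L2 -> lipL f L2.
Proof.
  intros H Hl t h h' ? ? ?. eapply Rle_trans; [apply H; auto|].
  apply Rmult_le_compat_r; [apply Rabs_pos|auto].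
Qed.

Lemma lip_bound f L t h h' : lipL f L -> 0 <= t -> 0 <= h -> 0 <= h' ->
  f t h <= f t h' + L * Rabs (h - h') /\ f t h' - L * Rabs (h - h') <= f t h.
Proof.
  intros H ? ? ?. specialize (H t h h' H0 H1 H2).
  apply Rabs_le_between in H. lra.
Qed.

Lemma uc0 f L K th : cont_quadrant f -> lipL f L -> 0 < L -> 0 <= K -> 0 < th ->
  exists d, 0 < d /\ forall s k, 0 <= s -> s < d -> 0 <= k <= K -> Rabs (f s k - f 0 k) < th.
Proof.
  intros Hc Hl HL HK Hth.
  set (eta := th / (4 * L)).
  assert (Heta : 0 < eta) by (unfold eta; apply Rdiv_lt_0_compat; lra).
  assert (Hg : forall n : nat, exists d, 0 < d /\ forall s k, 0 <= s -> s < d ->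
             0 <= k <= INR n * eta -> Rabs (f s k - f 0 k) < th).
  { induction n as [|n IH].
    - destruct (Hc 0 0 (Rle_refl 0) (Rle_refl 0) th Hth) as [d [Hd Hd']].
      exists d; split; auto. intros s k Hs Hsd Hk. simpl in Hk.
      replace k with 0 by lra. apply Hd'; try lra; rewrite Rabs_right; lra.
    - destruct IH as [d1 [Hd1 Hd1']].
      assert (Hn : 0 <= INR n * eta) by (apply Rmult_le_pos; [apply pos_INR|lra]).
      destruct (Hc 0 (INR n * eta) (Rle_refl 0) Hn (th/2)) as [d2 [Hd2 Hd2']]; [lra|].
      exists (Rmin d1 d2); split; [apply Rmin_pos; auto|].
      intros s k Hs Hsd Hk.
      assert (s < d1) by (eapply Rlt_le_trans; [exact Hsd| apply Rmin_l]).
      assert (s < d2) by (eapply Rlt_le_trans; [exact Hsd| apply Rmin_r]).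
      destruct (Rle_lt_dec k (INR n * eta)) as [Hk'|Hk'].
      + apply Hd1'; auto; lra.
      + rewrite S_INR in Hk.
        assert (Hc1 : Rabs (f s (INR n * eta) - f 0 (INR n * eta)) < th / 2).
        { apply Hd2'; try lra. rewrite Rminus_0_r, Rabs_right; lra.
          rewrite Rminus_diag, Rabs_R0; lra. }
        assert (Hk2 : Rabs (k - INR n * eta) <= eta) by (rewrite Rabs_right; lra).
        destruct (lip_bound f L s k (INR n * eta) Hl Hs ltac:(lra) Hn).
        destruct (lip_bound f L 0 k (INR n * eta) Hl ltac:(lra) ltac:(lra) Hn).
        assert (L * Rabs (k - INR n * eta) <= L * eta) by (apply Rmult_le_compat_l; lra).
        assert (L * eta = th / 4) by (unfold eta; field; lra).
        apply Rabs_lt_between in Hc1. apply Rabs_def1; lra. }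
  destruct (INR_unbounded (K / eta)) as [n Hn].
  destruct (Hg n) as [d [Hd Hd']]. exists d; split; auto.
  intros s k Hs Hsd Hk. apply Hd'; auto. split; try lra.
  apply Rle_trans with K; try lra.
  assert (K / eta * eta = K) by (field; lra).
  assert (K / eta * eta <= INR n * eta) by (apply Rmult_le_compat_r; lra). lra.
Qed.

Lemma max_t0 f T : cont_quadrant f -> 0 <= T ->
  exists C, forall t, 0 <= t <= T -> f t 0 <= C.
Proof.
  intros Hc HT.
  destruct (max4 (fun a b c d => f a 0) T 0 HT (Rle_refl 0)) as [a [b [c [d [Hin Hmax]]]]].
  - intros a b c d Hin eps Heps. destruct Hin as [Ha _].
    destruct (Hc a 0 ltac:(lra) (Rle_refl 0) eps Heps) as [del [Hdel Hdel']].
    exists del; split; auto. intros a' b' c' d' Hin' H1 H2 H3 H4. destruct Hin' as [Ha' _].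
    apply Hdel'; try lra. rewrite Rminus_diag, Rabs_R0; lra.
  - exists (f a 0). intros t Ht. apply (Hmax t 0 0 0). repeat split; lra.
Qed.

Lemma min_t0 f T : cont_quadrant f -> 0 <= T ->
  exists C, forall t, 0 <= t <= T -> C <= f t 0.
Proof.
  intros Hc HT. destruct (max_t0 (fun t h => - f t h) T) as [C HC]; auto.
  - intros t h Ht Hh eps Heps. destruct (Hc t h Ht Hh eps Heps) as [d [Hd Hd']].
    exists d; split; auto. intros. rewrite <- Rabs_Ropp. replace (- (- f s k - - f t h)) with (f s k - f t h) by ring. auto.
  - exists (- C). intros t Ht. specialize (HC t Ht). simpl in HC. lra.
Qed.
Definition Pen (eps al gam th ts : R) (N m : nat) (t s h k : R) :=
  (t - s)^2/(2*eps) + (h-k)^2/(2*eps) + al*(1+t)^N*(2 + h^2 + k^2) - gam*(h+k)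
  + th*(t/ts)^m + th*(s/ts)^m.

Definition Bp th ts (m : nat) t := th * (INR m * (t/ts)^(pred m) / ts).

Lemma Bp_nonneg th ts m t : 0 <= th -> 0 < ts -> 0 <= t -> 0 <= Bp th ts m t.
Proof.
  intros. unfold Bp. apply Rmult_le_pos; auto. unfold Rdiv.
  apply Rmult_le_pos; [apply Rmult_le_pos; [apply pos_INR| apply pow_le]|].
  apply Rmult_le_pos; [auto|left; apply Rinv_0_lt_compat; auto].
  left; apply Rinv_0_lt_compat; auto.
Qed.

Section D.
Variables (eps al gam th ts : R) (N m : nat).
Hypothesis (He : 0 < eps) (Hts : 0 < ts).

Lemma Pu_poly s0 k0 : Poly2 (fun t h => Pen eps al gam th ts N m t s0 h k0).
Proof. unfold Pen. poly2. Qed.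
Lemma Pv_poly t0 h0 : Poly2 (fun s k => - Pen eps al gam th ts N m t0 s h0 k).
Proof. unfold Pen. poly2. Qed.

Lemma Pu_dt s0 k0 t0 h0 :
  d_t (fun t h => Pen eps al gam th ts N m t s0 h k0) t0 h0 =
  (t0 - s0)/eps + al*(INR N*(1+t0)^(pred N))*(2+h0^2+k0^2) + Bp th ts m t0.
Proof.
  unfold d_t, Pen, Bp. apply is_derive_unique. auto_derive; [auto|].
  unfold Rdiv. generalize ((t0 * / ts) ^ Init.Nat.pred m). intro X. field. lra.
Qed.
Lemma Pu_dh s0 k0 t0 h0 :
  d_h (fun t h => Pen eps al gam th ts N m t s0 h k0) t0 h0 =
  (h0 - k0)/eps + al*(1+t0)^N*(2*h0) - gam.
Proof.
  unfold d_h, Pen. apply is_derive_unique. auto_derive; [auto|]. field. lra.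
Qed.
Lemma Pv_dt t0 h0 s0 k0 :
  d_t (fun s k => - Pen eps al gam th ts N m t0 s h0 k) s0 k0 =
  (t0 - s0)/eps - Bp th ts m s0.
Proof.
  unfold d_t, Pen, Bp. apply is_derive_unique. auto_derive; [auto|].
  unfold Rdiv. generalize ((s0 * / ts) ^ Init.Nat.pred m). intro X. field. lra.
Qed.
Lemma Pv_dh t0 h0 s0 k0 :
  d_h (fun s k => - Pen eps al gam th ts N m t0 s h0 k) s0 k0 =
  (h0 - k0)/eps - al*(1+t0)^N*(2*k0) + gam.
Proof.
  unfold d_h, Pen. apply is_derive_unique. auto_derive; [auto|]. field. lra.
Qed.
End D.

From Stdlib Require Import Reals Lra Psatz.
From Coquelicot Require Import Coquelicot.
Open Scope R_scope.

Section Main.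
Variables (u v : R -> R -> R) (L M ts hs th : R).
Hypothesis Hsub : visc_sub u.
Hypothesis Hsup : visc_super v.
Hypothesis HLu : lipL u L.
Hypothesis HLv : lipL v L.
Hypothesis HL1 : 1 <= L.
Hypothesis HM : forall h, 0 <= h -> u 0 h - v 0 h <= M.
Hypothesis Hts : 0 < ts.
Hypothesis Hhs : 0 <= hs.
Hypothesis Hth : 0 < th.
Hypothesis Hstar : u ts hs - v ts hs = M + 5*th.
Variables (n m : nat) (al gam eps K Cu Cv W R0 del : R).
Let T := 2*ts.
Let X := 1 + T.
Let N := S n.
Hypothesis HC1 : 112 * L * X <= INR N.
Hypothesis Hal0 : 0 < al.
Hypothesis Hal1 : al * X^(S N) <= INR N / 192.
Hypothesis Hal2 : al * X^N * (2 + 2*hs^2) <= th.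
Hypothesis HCu : forall t, 0<=t<=T -> u t 0 <= Cu.
Hypothesis HCv : forall t, 0<=t<=T -> Cv <= v t 0.
Hypothesis HW : W = (L+1)^2/(4*al).
Hypothesis HR0 : 0 <= R0.
Hypothesis HK1 : 1 <= K.
Hypothesis HKhs : hs <= K.
Hypothesis HK2 : L + 1 + R0 <= al*K.
Hypothesis HK3 : Cu - Cv + W - R0 < M + 2*th.
Hypothesis Hm : Cu - Cv + 2*W - th*2^m < M + 2*th.
Hypothesis Hg0 : 0 < gam.
Hypothesis Hg1 : gam <= 1.
Hypothesis Hg2 : 16*L*gam < al*INR N/4.
Hypothesis Hg3 : 2*gam*K <= th/2.
Hypothesis Hdel : 0 < del.
Hypothesis HUu : forall s k, 0<=s -> s<del -> 0<=k<=K -> Rabs (u s k - u 0 k) < th/4.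
Hypothesis HUv : forall s k, 0<=s -> s<del -> 0<=k<=K -> Rabs (v s k - v 0 k) < th/4.
Hypothesis He0 : 0 < eps.
Hypothesis He1 : L^2*eps/2 <= th/4.
Hypothesis He2 : Cu + L*K - (u 0 0 - L*K) <= del^2/(2*eps).
Hypothesis He3 : v 0 0 + L*K - (Cv - L*K) <= del^2/(2*eps).

Definition PP t s h k := Pen eps al gam th ts N m t s h k.
Definition Phi t s h k := u t h - v s k - PP t s h k.

Lemma B_nonneg t : 0 <= t -> 0 <= th * (t/ts)^m.
Proof.
  intros. apply Rmult_le_pos; [lra|]. apply pow_le. unfold Rdiv.
  apply Rmult_le_pos; [lra|left; apply Rinv_0_lt_compat; lra].
Qed.

Lemma pow1_ge x k : 1 <= x -> 1 <= x ^ k.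
Proof. intros; apply pow_R1_Rle; auto. Qed.

Lemma PP_lb t s h k : 0 <= t -> 0 <= s -> 0 <= h -> 0 <= k ->
  al*(h^2+k^2) - (h+k) + th*(t/ts)^m + th*(s/ts)^m <= PP t s h k.
Proof.
  intros. unfold PP, Pen.
  assert (0 <= (t-s)^2/(2*eps)) by (apply Rdiv_le_0_compat; [apply pow2_ge_0|lra]).
  assert (0 <= (h-k)^2/(2*eps)) by (apply Rdiv_le_0_compat; [apply pow2_ge_0|lra]).
  assert (1 <= (1+t)^N) by (apply pow1_ge; lra).
  assert (al*(h^2+k^2) <= al*(1+t)^N*(2+h^2+k^2)).
  { assert (0 <= h^2) by apply pow2_ge_0. assert (0 <= k^2) by apply pow2_ge_0.
    assert (al*1*(h^2+k^2) <= al*(1+t)^N*(h^2+k^2)).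
    { apply Rmult_le_compat_r; [lra|]. apply Rmult_le_compat_l; lra. }
    assert (0 <= al*(1+t)^N) by (apply Rmult_le_pos; lra). nra. }
  assert (gam*(h+k) <= h+k) by nra.
  lra.
Qed.

Lemma G_le x : (L+1)*x - al*x^2 <= W.
Proof.
  rewrite HW.
  assert ((L+1)^2/(4*al) - ((L+1)*x - al*x^2) = al*(x - (L+1)/(2*al))^2) by (field; lra).
  assert (0 <= al*(x - (L+1)/(2*al))^2) by (apply Rmult_le_pos; [lra|apply pow2_ge_0]).
  lra.
Qed.

Lemma G_K x : K <= x -> (L+1)*x - al*x^2 <= -R0.
Proof.
  intros. assert (al*K <= al*x) by (apply Rmult_le_compat_l; lra).
  assert ((L+1)*x - al*x^2 = x*((L+1) - al*x)) by ring.
  assert (x*((L+1) - al*x) <= x*(-R0)) by (apply Rmult_le_compat_l; lra).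
  nra.
Qed.

Lemma UB t s h k : 0 <= t <= T -> 0 <= s <= T -> 0 <= h -> 0 <= k ->
  Phi t s h k <= Cu - Cv + ((L+1)*h - al*h^2) + ((L+1)*k - al*k^2) - th*(t/ts)^m - th*(s/ts)^m.
Proof.
  intros. unfold Phi.
  destruct (lip_bound u L t h 0 HLu) as [Hb1 _]; try lra.
  destruct (lip_bound v L s k 0 HLv) as [_ Hb2]; try lra.
  rewrite Rminus_0_r, Rabs_right in Hb1, Hb2 by lra.
  specialize (HCu t H). specialize (HCv s H0).
  pose proof (PP_lb t s h k). simpl in *. nra.
Qed.

Lemma Phistar : M + 2*th <= Phi ts ts hs hs.
Proof.
  unfold Phi, PP, Pen.
  replace (ts/ts) with 1 by (field; lra). rewrite pow1.
  replace ((ts - ts)^2/(2*eps)) with 0 by (field; lra).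
  replace ((hs - hs)^2/(2*eps)) with 0 by (field; lra).
  assert ((1+ts)^N <= X^N) by (apply pow_incr; unfold X, T; lra).
  assert (al*(1+ts)^N*(2+hs^2+hs^2) <= al*X^N*(2+2*hs^2)).
  { replace (2+hs^2+hs^2) with (2+2*hs^2) by ring.
    apply Rmult_le_compat_r; [nra|]. apply Rmult_le_compat_l; lra. }
  assert (0 <= gam*(hs+hs)) by nra.
  lra.
Qed.


Lemma PP_poly4 : Poly4 PP.
Proof.
  apply Q_ext with (fun t s h k => (t - s)^2/(2*eps) + (h-k)^2/(2*eps) + al*(1+t)^N*(2 + h^2 + k^2) - gam*(h+k)
  + th*(t/ts)^m + th*(s/ts)^m).
  - poly4.
  - intros; unfold PP, Pen; reflexivity.
Qed.

Lemma Phi_cont : forall a b c d, inb T K a b c d -> forall e, 0<e -> exists d0, 0<d0 /\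
   forall a' b' c' d', inb T K a' b' c' d' -> Rabs (a'-a)<d0 -> Rabs(b'-b)<d0 ->
     Rabs(c'-c)<d0 -> Rabs(d'-d)<d0 -> Rabs (Phi a' b' c' d' - Phi a b c d) < e.
Proof.
  intros a b c d Hin e He.
  destruct Hin as [Ha [Hb [Hc Hd]]].
  destruct (proj1 Hsub a c ltac:(lra) ltac:(lra) (e/3)) as [d1 [Hd1 Hd1']]; [lra|].
  destruct (proj1 Hsup b d ltac:(lra) ltac:(lra) (e/3)) as [d2 [Hd2 Hd2']]; [lra|].
  destruct (Poly4_cont PP PP_poly4 a b c d (e/3)) as [d3 [Hd3 Hd3']]; [lra|].
  exists (Rmin d1 (Rmin d2 d3)). split.
  { apply Rmin_pos; auto. apply Rmin_pos; auto. }
  intros a' b' c' d' Hin' H1 H2 H3 H4. destruct Hin' as [Ha' [Hb' [Hc' Hd']]].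
  assert (Hm1 : Rmin d1 (Rmin d2 d3) <= d1) by apply Rmin_l.
  assert (Hm2 : Rmin d1 (Rmin d2 d3) <= d2) by (eapply Rle_trans; [apply Rmin_r|apply Rmin_l]).
  assert (Hm3 : Rmin d1 (Rmin d2 d3) <= d3) by (eapply Rle_trans; [apply Rmin_r|apply Rmin_r]).
  assert (E1 := Hd1' a' c' ltac:(lra) ltac:(lra) ltac:(lra) ltac:(lra)).
  assert (E2 := Hd2' b' d' ltac:(lra) ltac:(lra) ltac:(lra) ltac:(lra)).
  assert (E3 := Hd3' a' b' c' d' ltac:(lra) ltac:(lra) ltac:(lra) ltac:(lra)).
  unfold Phi.
  apply Rabs_lt_between in E1. apply Rabs_lt_between in E2. apply Rabs_lt_between in E3.
  apply Rabs_def1; lra.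
Qed.

Lemma the_max : exists t0 s0 h0 k0, inb T K t0 s0 h0 k0 /\
   forall a b c d, inb T K a b c d -> Phi a b c d <= Phi t0 s0 h0 k0.
Proof.
  apply max4; [unfold T; lra| lra| apply Phi_cont].
Qed.


Lemma PP_lb2 t s h k : 0 <= t -> 0 <= s -> 0 <= h -> 0 <= k ->
  (t-s)^2/(2*eps) + (h-k)^2/(2*eps) - gam*(h+k) <= PP t s h k.
Proof.
  intros. unfold PP, Pen.
  assert (1 <= (1+t)^N) by (apply pow1_ge; lra).
  assert (0 <= al*(1+t)^N*(2+h^2+k^2)).
  { apply Rmult_le_pos; [apply Rmult_le_pos; lra|]. nra. }
  pose proof (B_nonneg t). pose proof (B_nonneg s). lra.
Qed.

Lemma amgm D : L * Rabs D - D^2/(2*eps) <= th/4.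
Proof.
  assert (HD : D^2 = Rabs D * Rabs D) by (pose proof (Rsqr_abs D); unfold Rsqr in *; lra).
  rewrite HD.
  assert (L * Rabs D - Rabs D * Rabs D/(2*eps) = L^2*eps/2 - (Rabs D - L*eps)^2/(2*eps)) by (field; lra).
  assert (0 <= (Rabs D - L*eps)^2/(2*eps)) by (apply Rdiv_le_0_compat; [apply pow2_ge_0|lra]).
  lra.
Qed.

Lemma init_t s0 h0 k0 : 0 <= s0 <= T -> 0 <= h0 <= K -> 0 <= k0 <= K -> Phi 0 s0 h0 k0 <= M + th.
Proof.
  intros Hs Hh Hk. unfold Phi.
  pose proof (PP_lb2 0 s0 h0 k0 ltac:(lra) ltac:(lra) ltac:(lra) ltac:(lra)) as HP.
  pose proof (HM h0 ltac:(lra)) as HM0.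
  destruct (lip_bound v L 0 h0 k0 HLv) as [Hv1 _]; try lra.
  pose proof (amgm (h0 - k0)) as Ham.
  assert (gam*(h0+k0) <= 2*gam*K) by nra.
  assert (HE : v 0 k0 - v s0 k0 - (0 - s0)^2/(2*eps) <= th/4).
  { destruct (Rlt_le_dec s0 del) as [Hsd|Hsd].
    - pose proof (HUv s0 k0 ltac:(lra) Hsd Hk) as H1. apply Rabs_lt_between in H1.
      assert (0 <= (0 - s0)^2/(2*eps)) by (apply Rdiv_le_0_compat; [apply pow2_ge_0|lra]). lra.
    - assert (del^2/(2*eps) <= (0-s0)^2/(2*eps)).
      { apply Rmult_le_compat_r; [left; apply Rinv_0_lt_compat; lra|]. nra. }
      destruct (lip_bound v L 0 k0 0 HLv) as [Hv2 _]; try lra.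
      destruct (lip_bound v L s0 k0 0 HLv) as [_ Hv3]; try lra.
      rewrite Rminus_0_r, Rabs_right in Hv2, Hv3 by lra.
      pose proof (HCv s0 Hs).
      assert (L*k0 <= L*K) by (apply Rmult_le_compat_l; lra).
      lra. }
  lra.
Qed.

Lemma init_s t0 h0 k0 : 0 <= t0 <= T -> 0 <= h0 <= K -> 0 <= k0 <= K -> Phi t0 0 h0 k0 <= M + th.
Proof.
  intros Hs Hh Hk. unfold Phi.
  pose proof (PP_lb2 t0 0 h0 k0 ltac:(lra) ltac:(lra) ltac:(lra) ltac:(lra)) as HP.
  pose proof (HM h0 ltac:(lra)) as HM0.
  destruct (lip_bound v L 0 h0 k0 HLv) as [Hv1 _]; try lra.
  pose proof (amgm (h0 - k0)) as Ham.
  assert (gam*(h0+k0) <= 2*gam*K) by nra.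
  assert (HE : u t0 h0 - u 0 h0 - (t0 - 0)^2/(2*eps) <= th/4).
  { destruct (Rlt_le_dec t0 del) as [Hsd|Hsd].
    - pose proof (HUu t0 h0 ltac:(lra) Hsd Hh) as H1. apply Rabs_lt_between in H1.
      assert (0 <= (t0 - 0)^2/(2*eps)) by (apply Rdiv_le_0_compat; [apply pow2_ge_0|lra]). lra.
    - assert (del^2/(2*eps) <= (t0-0)^2/(2*eps)).
      { apply Rmult_le_compat_r; [left; apply Rinv_0_lt_compat; lra|]. nra. }
      destruct (lip_bound u L t0 h0 0 HLu) as [Hv2 _]; try lra.
      destruct (lip_bound u L 0 h0 0 HLu) as [_ Hv3]; try lra.
      rewrite Rminus_0_r, Rabs_right in Hv2, Hv3 by lra.
      pose proof (HCu t0 Hs).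
      assert (L*h0 <= L*K) by (apply Rmult_le_compat_l; lra).
      lra. }
  lra.
Qed.

Lemma ode t0 : 0 <= t0 <= T ->
  48*(al*(1+t0)^N)^2 + 56*L*(al*(1+t0)^N) + 16*L*gam < al*(INR N*(1+t0)^(pred N)).
Proof.
  intros Ht. unfold N. simpl pred. unfold N in *.
  set (x := 1 + t0). assert (Hx1 : 1 <= x) by (unfold x; lra).
  assert (HxX : x <= X). { subst x. unfold X, T in *. lra. }
  set (y := x ^ n). assert (Hy : 1 <= y) by (apply pow1_ge; auto).
  assert (E1 : x ^ S n = x * y) by (simpl; auto).
  assert (E2 : x ^ S (S n) = x * (x * y)) by (simpl; auto).
  rewrite E1.
  assert (HxS : x ^ S (S n) <= X ^ S (S n)) by (apply pow_incr; lra).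
  rewrite E2 in HxS.
  assert (Hpos : 0 < INR (S n)) by (apply lt_0_INR; lia).
  assert (H56 : 56*L*(al*(x*y)) <= al*y*INR (S n)/2).
  { assert (112*L*x <= INR (S n)).
    { apply Rle_trans with (112*L*X); auto. apply Rmult_le_compat_l; lra. }
    assert (0 <= al*y) by (apply Rmult_le_pos; lra). nra. }
  assert (H48 : 48*(al*(x*y))^2 <= al*y*INR (S n)/4).
  { assert (al * (x*(x*y)) <= INR (S n)/192).
    { apply Rle_trans with (al * X ^ S (S n)); auto. apply Rmult_le_compat_l; lra. }
    assert (0 <= al*y) by (apply Rmult_le_pos; lra).
    replace (48*(al*(x*y))^2) with (48*(al*y)*(al*(x*(x*y)))) by ring. nra. }
  assert (H16 : al*INR (S n)/4 <= al*y*INR (S n)/4).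
  { assert (0 <= al * INR (S n)) by (apply Rmult_le_pos; lra). nra. }
  lra.
Qed.

Lemma final_alg A A' Q p D S h0 k0 :
  0 <= h0 -> 0 <= k0 -> S = h0 + k0 -> D = h0 - k0 -> Q = 2 + h0^2 + k0^2 ->
  0 <= A ->
  48*A^2 + 56*L*A + 16*L*gam < A' ->
  p * D / 2 + A*S*D - gam*D <= L * Rabs D ->
  (0 < D -> 0 < p) -> (D < 0 -> p < 0) -> (D = 0 -> p = 0) ->
  A'*Q <= 2*(p + A*(2*h0) - gam)^2 - 2*(p - A*(2*k0) + gam)^2 -> False.
Proof.
  intros Hh Hk HS HD HQ HA HA' Hc Hp1 Hp2 Hp3 Hineq.
  assert (HS0 : 0 <= S) by lra.
  assert (HAS : 0 <= A*S) by (apply Rmult_le_pos; lra).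
  assert (Hpb : Rabs p <= 2*L + 2*gam + 2*A*S).
  { destruct (Rtotal_order D 0) as [Hlt|[Heq|Hgt]].
    - rewrite Rabs_left in Hc by lra. specialize (Hp2 Hlt). rewrite Rabs_left by lra.
      assert (p/2 + A*S - gam >= - L).
      { apply Rnot_lt_ge; intro Hn.
        assert (D*(p/2 + A*S - gam) > D*(-L)) by (apply Rmult_lt_gt_compat_neg_l; lra).
        assert (D*(p/2 + A*S - gam) = p*D/2 + A*S*D - gam*D) by field. lra. }
      lra.
    - rewrite (Hp3 Heq), Rabs_R0. lra.
    - rewrite Rabs_right in Hc by lra. specialize (Hp1 Hgt). rewrite Rabs_right by lra.
      assert (p/2 + A*S - gam <= L).
      { apply Rnot_lt_le; intro Hn.
        assert ((p/2 + A*S - gam)*D > L*D) by (apply Rmult_lt_compat_r; lra).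
        assert ((p/2 + A*S - gam)*D = p*D/2 + A*S*D - gam*D) by field. lra. }
      lra. }
  assert (HZ : 2*(p + A*(2*h0) - gam)^2 - 2*(p - A*(2*k0) + gam)^2 = 8*(A*S - gam)*(p + A*D))
    by (rewrite HS, HD; ring).
  assert (HDS : Rabs D <= S) by (rewrite HD, HS; apply Rabs_le; lra).
  assert (HAD : Rabs (A*D) <= A*S) by (rewrite Rabs_mult, Rabs_right by lra; apply Rmult_le_compat_l; lra).
  assert (Hf1 : Rabs (A*S - gam) <= A*S + gam) by (apply Rabs_le; lra).
  assert (Hf2 : Rabs (p + A*D) <= 2*L + 2*gam + 3*A*S).
  { eapply Rle_trans; [apply Rabs_triang|]. lra. }
  assert (HZ2 : 8*(A*S - gam)*(p + A*D) <= 8*((A*S + gam)*(2*L + 2*gam + 3*A*S))).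
  { eapply Rle_trans; [apply Rle_abs|]. rewrite Rabs_mult, Rabs_mult, (Rabs_right 8) by lra.
    rewrite Rmult_assoc. apply Rmult_le_compat_l; [lra|].
    apply Rmult_le_compat; try apply Rabs_pos; auto. }
  assert (HS2 : S^2 <= 2*Q - 4) by (rewrite HS, HQ; nra).
  assert (HASb : A*S <= A*(1+S^2)/2).
  { assert (S <= (1+S^2)/2) by (pose proof (pow2_ge_0 (S-1)); nra).
    assert (A*S <= A*((1+S^2)/2)) by (apply Rmult_le_compat_l; lra). lra. }
  assert (HB : 8*((A*S + gam)*(2*L + 2*gam + 3*A*S)) <= 24*A^2*S^2 + 56*L*(A*S) + 32*L*gam).
  { assert (gam*(A*S) <= L*(A*S)) by (apply Rmult_le_compat_r; lra).
    assert (gam*gam <= L*gam) by (apply Rmult_le_compat_r; lra).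
    assert (8*((A*S + gam)*(2*L + 2*gam + 3*A*S)) = 24*(A*S)^2 + 16*L*(A*S) + 40*gam*(A*S) + 16*L*gam + 16*gam*gam) by ring.
    assert ((A*S)^2 = A^2*S^2) by ring. lra. }
  assert (HQ2 : 2 <= Q) by (rewrite HQ; nra).
  assert (HB2 : 24*A^2*S^2 + 56*L*(A*S) + 32*L*gam <= (48*A^2 + 56*L*A + 16*L*gam)*Q).
  { assert (A^2*S^2 <= A^2*(2*Q)) by (apply Rmult_le_compat_l; [apply pow2_ge_0|lra]).
    assert (L*(A*S) <= L*(A*Q)).
    { apply Rmult_le_compat_l; [lra|]. apply Rle_trans with (A*(1+S^2)/2); auto.
      assert (A*(1+S^2) <= A*(2*Q)) by (apply Rmult_le_compat_l; lra). lra. }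
    assert (0 <= L*gam) by (apply Rmult_le_pos; lra).
    assert (32*L*gam <= 16*L*gam*Q) by (assert (L*gam*2 <= L*gam*Q) by (apply Rmult_le_compat_l; lra); lra).
    assert ((48*A^2 + 56*L*A + 16*L*gam)*Q = 48*(A^2*Q) + 56*(L*(A*Q)) + 16*L*gam*Q) by ring.
    lra. }
  assert (A'*Q > (48*A^2 + 56*L*A + 16*L*gam)*Q) by (apply Rmult_gt_compat_r; lra).
  lra.
Qed.

Lemma contra : False.
Proof.
  destruct the_max as [t0 [s0 [h0 [k0 [Hin Hmax]]]]].
  destruct Hin as [Ht0 [Hs0 [Hh0 Hk0]]].
  assert (HTd : T = 2*ts) by reflexivity.
  assert (HPm : M + 2*th <= Phi t0 s0 h0 k0).
  { apply Rle_trans with (Phi ts ts hs hs); [apply Phistar|]. apply Hmax. unfold inb; repeat split; lra. }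
  assert (Hext : forall t s h k, 0<=t<=T -> 0<=s<=T -> 0<=h -> 0<=k -> Phi t s h k <= Phi t0 s0 h0 k0).
  { intros t s h k Ht Hs Hh Hk.
    pose proof (UB t s h k Ht Hs Hh Hk).
    pose proof (B_nonneg t ltac:(lra)). pose proof (B_nonneg s ltac:(lra)).
    pose proof (G_le h). pose proof (G_le k).
    destruct (Rle_lt_dec h K) as [HhK|HhK]; destruct (Rle_lt_dec k K) as [HkK|HkK].
    - apply Hmax; unfold inb; repeat split; lra.
    - pose proof (G_K k ltac:(lra)). lra.
    - pose proof (G_K h ltac:(lra)). lra.
    - pose proof (G_K k ltac:(lra)). pose proof (G_K h ltac:(lra)). lra. }
  assert (H2m : th * (T/ts)^m = th * 2^m).
  { rewrite HTd. replace (2*ts/ts) with 2 by (field; lra). reflexivity. }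
  assert (Ht0T : t0 < T).
  { destruct (Rlt_le_dec t0 T) as [|HT]; auto. exfalso. assert (E : t0 = T) by lra.
    pose proof (UB t0 s0 h0 k0 ltac:(lra) ltac:(lra) ltac:(lra) ltac:(lra)).
    assert (th*(t0/ts)^m = th*2^m) by (rewrite E; exact H2m).
    pose proof (B_nonneg s0 ltac:(lra)). pose proof (G_le h0). pose proof (G_le k0). lra. }
  assert (Hs0T : s0 < T).
  { destruct (Rlt_le_dec s0 T) as [|HT]; auto. exfalso. assert (E : s0 = T) by lra.
    pose proof (UB t0 s0 h0 k0 ltac:(lra) ltac:(lra) ltac:(lra) ltac:(lra)).
    assert (th*(s0/ts)^m = th*2^m) by (rewrite E; exact H2m).
    pose proof (B_nonneg t0 ltac:(lra)). pose proof (G_le h0). pose proof (G_le k0). lra. }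
  assert (Ht0p : 0 < t0).
  { destruct (Rlt_le_dec 0 t0) as [|HT]; auto. exfalso. assert (E : t0 = 0) by lra.
    pose proof (init_t s0 h0 k0 ltac:(lra) ltac:(lra) ltac:(lra)). rewrite E in HPm. lra. }
  assert (Hs0p : 0 < s0).
  { destruct (Rlt_le_dec 0 s0) as [|HT]; auto. exfalso. assert (E : s0 = 0) by lra.
    pose proof (init_s t0 h0 k0 ltac:(lra) ltac:(lra) ltac:(lra)). rewrite E in HPm. lra. }
  set (phu := fun t h => Pen eps al gam th ts N m t s0 h k0).
  assert (Hlu : loc_max (fun t h => u t h - phu t h) t0 h0).
  { exists (T - t0). split; [lra|]. intros t h Ht Hh H1 H2.
    apply Rabs_lt_between in H1.
    pose proof (Hext t s0 h k0 ltac:(lra) ltac:(lra) Hh ltac:(lra)).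
    unfold Phi, PP in *. unfold phu. lra. }
  destruct (proj2 Hsub t0 h0 phu (conj Ht0p (proj1 Hh0)) (Poly2_test _ (Pu_poly eps al gam th ts N m s0 k0)) Hlu)
    as [Hu1 Hu2].
  assert (EQu : d_t phu t0 h0 - 2 * (d_h phu t0 h0)^2 <= 0).
  { destruct (Rlt_le_dec 0 h0) as [Hp|Hz]; [apply Hu1; auto|].
    assert (E : h0 = 0) by lra. specialize (Hu2 E).
    assert (Hd : 0 < - d_h phu t0 h0).
    { unfold phu. rewrite (Pu_dh eps al gam th ts N m He0). rewrite E.
      assert (0 <= k0/eps) by (apply Rdiv_le_0_compat; lra).
      replace ((0 - k0)/eps) with (-(k0/eps)) by (field; lra). lra. }
    unfold Rmin in Hu2. destruct Rle_dec in Hu2; lra. }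
  unfold phu in EQu.
  rewrite (Pu_dt eps al gam th ts N m He0 Hts), (Pu_dh eps al gam th ts N m He0) in EQu.
  set (phv := fun s k => - Pen eps al gam th ts N m t0 s h0 k).
  assert (Hlv : loc_min (fun s k => v s k - phv s k) s0 k0).
  { exists (T - s0). split; [lra|]. intros s k Hs Hk H1 H2.
    apply Rabs_lt_between in H1.
    pose proof (Hext t0 s h0 k ltac:(lra) ltac:(lra) ltac:(lra) Hk).
    unfold Phi, PP in *. unfold phv. lra. }
  destruct (proj2 Hsup s0 k0 phv (conj Hs0p (proj1 Hk0)) (Poly2_test _ (Pv_poly eps al gam th ts N m t0 h0)) Hlv)
    as [Hv1 Hv2].
  assert (EQv : d_t phv s0 k0 - 2 * (d_h phv s0 k0)^2 >= 0).
  { destruct (Rlt_le_dec 0 k0) as [Hp|Hz]; [apply Hv1; auto|].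
    assert (E : k0 = 0) by lra. specialize (Hv2 E).
    assert (Hd : - d_h phv s0 k0 < 0).
    { unfold phv. rewrite (Pv_dh eps al gam th ts N m He0). rewrite E.
      assert (0 <= h0/eps) by (apply Rdiv_le_0_compat; lra).
      replace ((h0 - 0)/eps) with (h0/eps) by (field; lra). lra. }
    unfold Rmax in Hv2. destruct Rle_dec in Hv2; lra. }
  unfold phv in EQv.
  rewrite (Pv_dt eps al gam th ts N m He0 Hts), (Pv_dh eps al gam th ts N m He0) in EQv.
  pose proof (Bp_nonneg th ts m t0 ltac:(lra) Hts ltac:(lra)).
  pose proof (Bp_nonneg th ts m s0 ltac:(lra) Hts ltac:(lra)).
  assert (Hc : Phi t0 s0 k0 k0 <= Phi t0 s0 h0 k0) by (apply Hmax; unfold inb; repeat split; lra).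
  assert (Hlip : u t0 h0 - u t0 k0 <= L * Rabs (h0 - k0)).
  { destruct (lip_bound u L t0 h0 k0 HLu); lra. }
  assert (HPd : PP t0 s0 h0 k0 - PP t0 s0 k0 k0 =
     (h0-k0)/eps*(h0-k0)/2 + al*(1+t0)^N*(h0+k0)*(h0-k0) - gam*(h0-k0))
    by (unfold PP, Pen; field; lra).
  apply (final_alg (al*(1+t0)^N) (al*(INR N*(1+t0)^(pred N))) (2 + h0^2 + k0^2) ((h0-k0)/eps)
           (h0 - k0) (h0 + k0) h0 k0); try lra.
  - apply Rmult_le_pos; [lra|]. apply pow_le; lra.
  - apply ode; lra.
  - unfold Phi in Hc. lra.
  - intros; apply Rdiv_lt_0_compat; lra.
  - intros; unfold Rdiv; apply Rmult_neg_pos; [lra|]. apply Rinv_0_lt_compat; lra.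
  - intros E; rewrite E; unfold Rdiv; ring.
Qed.

End Main.

From Stdlib Require Import Reals Lra Psatz.
From Coquelicot Require Import Coquelicot.
Open Scope R_scope.

Lemma INR_le_pow2 k : INR k <= 2 ^ k.
Proof.
  induction k as [|k IH]; [simpl; lra|]. rewrite S_INR.
  replace (2 ^ S k) with (2 * 2^k) by (simpl; ring).
  assert (1 <= 2^k) by (apply pow_R1_Rle; lra). lra.
Qed.

Lemma key (u v : R -> R -> R) :
  visc_sub u -> visc_super v -> unif_lip_h u -> unif_lip_h v ->
  forall M, (forall h, 0 <= h -> u 0 h - v 0 h <= M) ->
  forall t h, 0 <= t -> 0 <= h -> u t h - v t h <= M.
Proof.
  intros Hsub Hsup [Lu HLu0] [Lv HLv0] M HM t h Ht Hh.
  destruct (Rle_lt_dec (u t h - v t h) M) as [|Hlt]; auto. exfalso.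
  set (L := Rmax 1 (Rmax Lu Lv)).
  assert (HL1 : 1 <= L) by apply Rmax_l.
  assert (HLu : lipL u L).
  { apply lip_norm with Lu; [exact HLu0|]. unfold L. eapply Rle_trans; [apply Rmax_l|apply Rmax_r]. }
  assert (HLv : lipL v L).
  { apply lip_norm with Lv; [exact HLv0|]. unfold L. eapply Rle_trans; [apply Rmax_r|apply Rmax_r]. }
  assert (Hts : 0 < t).
  { destruct (Rlt_le_dec 0 t) as [|H0]; auto. assert (t = 0) by lra. subst t.
    pose proof (HM h Hh). lra. }
  set (th := (u t h - v t h - M)/5).
  assert (Hth : 0 < th) by (unfold th; lra).
  assert (Hstar : u t h - v t h = M + 5*th) by (unfold th; field).
  set (X := 1 + 2*t).
  assert (HX : 1 <= X) by (unfold X; lra).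
  destruct (INR_unbounded (112*L*X)) as [n Hn].
  assert (HC1 : 112*L*(1+2*t) <= INR (S n)) by (rewrite S_INR; fold X; lra).
  assert (HNp : 0 < INR (S n)) by (apply lt_0_INR; lia).
  assert (HXp : forall k, 0 < X ^ k) by (intros; apply pow_lt; lra).
  set (al := Rmin (INR (S n) / (192 * X^(S (S n)))) (th / (X^(S n) * (2 + 2*h^2)))).
  assert (Hal0 : 0 < al).
  { apply Rmin_pos; apply Rdiv_lt_0_compat; auto.
    - pose proof (HXp (S (S n))); lra.
    - pose proof (HXp (S n)). apply Rmult_lt_0_compat; auto. nra. }
  assert (Hal1 : al * (1+2*t)^(S (S n)) <= INR (S n)/192).
  { fold X. assert (al <= INR (S n) / (192 * X^(S (S n)))) by apply Rmin_l.
    pose proof (HXp (S (S n))).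
    apply Rmult_le_compat_r with (r := X^(S (S n))) in H; [|lra].
    replace (INR (S n) / (192 * X ^ S (S n)) * X ^ S (S n)) with (INR (S n)/192) in H by (field; lra).
    lra. }
  assert (Hal2 : al * (1+2*t)^(S n) * (2 + 2*h^2) <= th).
  { fold X. assert (al <= th / (X^(S n) * (2 + 2*h^2))) by apply Rmin_r.
    pose proof (HXp (S n)). assert (0 < 2 + 2*h^2) by nra.
    assert (0 < X^(S n) * (2 + 2*h^2)) by (apply Rmult_lt_0_compat; lra).
    apply Rmult_le_compat_r with (r := X^(S n) * (2 + 2*h^2)) in H; [|lra].
    replace (th / (X ^ S n * (2 + 2 * h ^ 2)) * (X ^ S n * (2 + 2 * h ^ 2))) with th in H by (field; lra).
    rewrite Rmult_assoc. lra. }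
  destruct (max_t0 u (2*t) (proj1 Hsub) ltac:(lra)) as [Cu HCu].
  destruct (min_t0 v (2*t) (proj1 Hsup) ltac:(lra)) as [Cv HCv].
  set (W := (L+1)^2/(4*al)).
  assert (HW : W = (L+1)^2/(4*al)) by reflexivity.
  assert (HW0 : 0 <= W) by (unfold W; apply Rdiv_le_0_compat; [apply pow2_ge_0|lra]).
  set (R0 := Rabs (Cu - Cv) + W + Rabs M + 1).
  assert (HR0 : 0 <= R0) by (unfold R0; pose proof (Rabs_pos (Cu - Cv)); pose proof (Rabs_pos M); lra).
  assert (HK3 : Cu - Cv + W - R0 < M + 2*th).
  { unfold R0. pose proof (Rle_abs (Cu - Cv)). pose proof (Rle_abs (-M)). rewrite Rabs_Ropp in H0. lra. }
  set (K := Rmax 1 (Rmax h ((L+1+R0)/al))).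
  assert (HK1 : 1 <= K) by apply Rmax_l.
  assert (HKhs : h <= K) by (unfold K; eapply Rle_trans; [apply Rmax_l|apply Rmax_r]).
  assert (HK2 : L + 1 + R0 <= al*K).
  { assert ((L+1+R0)/al <= K) by (unfold K; eapply Rle_trans; [apply Rmax_r|apply Rmax_r]).
    apply Rmult_le_compat_l with (r := al) in H; [|lra].
    replace (al * ((L+1+R0)/al)) with (L+1+R0) in H by (field; lra). lra. }
  destruct (INR_unbounded ((Rabs (Cu - Cv) + 2*W + Rabs M)/th)) as [m Hm0].
  assert (Hm : Cu - Cv + 2*W - th*2^m < M + 2*th).
  { pose proof (INR_le_pow2 m).
    assert (th * ((Rabs (Cu - Cv) + 2*W + Rabs M)/th) < th * 2^m) by (apply Rmult_lt_compat_l; lra).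
    replace (th * ((Rabs (Cu - Cv) + 2*W + Rabs M)/th)) with (Rabs (Cu - Cv) + 2*W + Rabs M) in H0 by (field; lra).
    pose proof (Rle_abs (Cu - Cv)). pose proof (Rle_abs (-M)). rewrite Rabs_Ropp in H2. lra. }
  set (gam := Rmin 1 (Rmin (al*INR (S n)/(128*L)) (th/(8*K)))).
  assert (Hg0 : 0 < gam).
  { apply Rmin_pos; [lra|]. apply Rmin_pos; apply Rdiv_lt_0_compat; try lra.
    apply Rmult_lt_0_compat; lra. }
  assert (Hg1 : gam <= 1) by apply Rmin_l.
  assert (Hg2 : 16*L*gam < al*INR (S n)/4).
  { assert (gam <= al*INR (S n)/(128*L)) by (unfold gam; eapply Rle_trans; [apply Rmin_r|apply Rmin_l]).
    apply Rmult_le_compat_l with (r := 16*L) in H; [|lra].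
    replace (16 * L * (al * INR (S n) / (128 * L))) with (al*INR (S n)/8) in H by (field; lra).
    assert (0 < al * INR (S n)) by (apply Rmult_lt_0_compat; lra). lra. }
  assert (Hg3 : 2*gam*K <= th/2).
  { assert (gam <= th/(8*K)) by (unfold gam; eapply Rle_trans; [apply Rmin_r|apply Rmin_r]).
    apply Rmult_le_compat_l with (r := 2*K) in H; [|lra].
    replace (2 * K * (th / (8 * K))) with (th/4) in H by (field; lra). lra. }
  destruct (uc0 u L K (th/4) (proj1 Hsub) HLu ltac:(lra) ltac:(lra) ltac:(lra)) as [du [Hdu HUu0]].
  destruct (uc0 v L K (th/4) (proj1 Hsup) HLv ltac:(lra) ltac:(lra) ltac:(lra)) as [dv [Hdv HUv0]].
  set (del := Rmin du dv).
  assert (Hdel : 0 < del) by (apply Rmin_pos; auto).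
  assert (HUu : forall s k, 0<=s -> s<del -> 0<=k<=K -> Rabs (u s k - u 0 k) < th/4).
  { intros. apply HUu0; auto. eapply Rlt_le_trans; [eauto|apply Rmin_l]. }
  assert (HUv : forall s k, 0<=s -> s<del -> 0<=k<=K -> Rabs (v s k - v 0 k) < th/4).
  { intros. apply HUv0; auto. eapply Rlt_le_trans; [eauto|apply Rmin_r]. }
  set (Z := Rabs (Cu + L*K - (u 0 0 - L*K)) + Rabs (v 0 0 + L*K - (Cv - L*K)) + 1).
  assert (HZ : 1 <= Z) by (unfold Z; pose proof (Rabs_pos (Cu + L*K - (u 0 0 - L*K)));
                            pose proof (Rabs_pos (v 0 0 + L*K - (Cv - L*K))); lra).
  assert (HL2 : 0 < L^2) by nra.
  set (eps := Rmin (th/(2*L^2)) (del^2/(2*Z))).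
  assert (He0 : 0 < eps).
  { apply Rmin_pos; apply Rdiv_lt_0_compat; try lra. nra. }
  assert (He1 : L^2*eps/2 <= th/4).
  { assert (eps <= th/(2*L^2)) by apply Rmin_l.
    apply Rmult_le_compat_l with (r := L^2) in H; [|lra].
    replace (L^2 * (th/(2*L^2))) with (th/2) in H by (field; lra). lra. }
  assert (HeZ : Z <= del^2/(2*eps)).
  { assert (eps <= del^2/(2*Z)) by apply Rmin_r.
    apply Rmult_le_compat_l with (r := 2*Z) in H; [|lra].
    replace (2*Z*(del^2/(2*Z))) with (del^2) in H by (field; lra).
    apply Rmult_le_reg_r with (2*eps); [lra|].
    replace (del^2/(2*eps)*(2*eps)) with (del^2) by (field; lra). lra. }
  assert (He2 : Cu + L*K - (u 0 0 - L*K) <= del^2/(2*eps)).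
  { pose proof (Rle_abs (Cu + L*K - (u 0 0 - L*K))). pose proof (Rabs_pos (v 0 0 + L*K - (Cv - L*K))).
    unfold Z in HeZ. lra. }
  assert (He3 : v 0 0 + L*K - (Cv - L*K) <= del^2/(2*eps)).
  { pose proof (Rle_abs (v 0 0 + L*K - (Cv - L*K))). pose proof (Rabs_pos (Cu + L*K - (u 0 0 - L*K))).
    unfold Z in HeZ. lra. }
  exact (contra u v L M t h th Hsub Hsup HLu HLv HL1 HM Hts Hh Hth Hstar n m al gam eps K Cu Cv W R0 del
    HC1 Hal0 Hal1 Hal2 HCu HCv HW HR0 HK1 HKhs HK2 HK3 Hm Hg0 Hg1 Hg2 Hg3 Hdel HUu HUv He0 He1 He2 He3).
Qed.

Theorem proposition4p2 (u v : R -> R -> R) :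
  visc_sub u -> visc_super v -> unif_lip_h u -> unif_lip_h v ->
  sup_quadrant u v = sup_initial u v.
Proof.
  intros Hu Hv Lu Lv.
  unfold sup_quadrant, sup_initial.
  apply is_lub_Rbar_unique.
  destruct (Lub_Rbar_correct (fun x => exists h, 0 <= h /\ x = u 0 h - v 0 h)) as [Hub Hle].
  split.
  - intros x [t [h [Ht [Hh ->]]]].
    destruct (Lub_Rbar (fun x => exists h, 0 <= h /\ x = u 0 h - v 0 h)) as [M| |] eqn:E.
    + simpl. apply (key u v Hu Hv Lu Lv M); auto.
      intros h' Hh'. apply (Hub (u 0 h' - v 0 h')). exists h'; split; auto; lra.
    + simpl; auto.
    + exfalso. apply (Hub (u 0 0 - v 0 0)). exists 0; split; auto; lra.
  - intros b Hb. apply Hle. intros x [h [Hh ->]]. apply Hb. exists 0, h. repeat split; auto; lra.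
Qed.
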